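(* Let $D$ be a dissection of the unit square $[0,1]^2$ into $n$ triangles. Then there exists a dissection $D'$ of the unit square into $n+2$ triangles with $\mathcal{R}(D')=\frac{n}{n+2}\mathcal{R}(D)$ and $\mathrm{RMS}(D')=\bigl(\frac{n}{n+2}\bigr)^{3/2}\mathrm{RMS}(D)$.
   Context: A dissection of a polygon $P$ of area $E$ is a finite set of triangles with disjoint interiors whose union is $P$. If its triangles have areas $a_1,\dots,a_n$, the range is $\mathcal{R}(D)=\max_{i,j}|a_i-a_j|$ and $\mathrm{RMS}(D)=\sqrt{\frac1n\sum_{i=1}^n(a_i-E/n)^2}$. *)

(* Defs.v *)
From Stdlib Require Import Reals List.
Open Scope R_scope.

Definition point : Type := (R * R)%type.
Definition tri : Type := (point * point * point)%type.

Definition tri_area (T : tri) : R :=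
  let '(A, B, C) := T in
  let '(ax, ay) := A in let '(bx, by_) := B in let '(cx, cy) := C in
  Rabs ((bx - ax) * (cy - ay) - (cx - ax) * (by_ - ay)) / 2.

Definition in_closed_tri (T : tri) (p : point) : Prop :=
  let '(A, B, C) := T in
  exists a b c : R, 0 <= a /\ 0 <= b /\ 0 <= c /\ a + b + c = 1 /\
    fst p = a * fst A + b * fst B + c * fst C /\
    snd p = a * snd A + b * snd B + c * snd C.

Definition in_open_tri (T : tri) (p : point) : Prop :=
  let '(A, B, C) := T in
  exists a b c : R, 0 < a /\ 0 < b /\ 0 < c /\ a + b + c = 1 /\
    fst p = a * fst A + b * fst B + c * fst C /\
    snd p = a * snd A + b * snd B + c * snd C.

Definition in_unit_square (p : point) : Prop :=
  0 <= fst p <= 1 /\ 0 <= snd p <= 1.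

Definition is_dissection (P : point -> Prop) (D : list tri) : Prop :=
  (forall T, In T D -> 0 < tri_area T) /\
  (forall i j : nat, (i < length D)%nat -> (j < length D)%nat -> i <> j ->
     forall p, ~ (in_open_tri (nth i D ((0,0),(0,0),(0,0))) p /\
                  in_open_tri (nth j D ((0,0),(0,0),(0,0))) p)) /\
  (forall p, P p <-> exists T, In T D /\ in_closed_tri T p).

Definition areas (D : list tri) : list R := map tri_area D.

Definition range (D : list tri) : R :=
  let l := areas D in
  fold_right Rmax 0 (map (fun a => fold_right Rmax 0 (map (fun b => Rabs (a - b)) l)) l).

Definition sumR (l : list R) : R := fold_right Rplus 0 l.

(* RMS with respect to the total area E of the dissected polygon. *)
Definition rms (E : R) (D : list tri) : R :=
  let n := INR (length D) in
  sqrt (/ n * sumR (map (fun a => (a - E / n) ^ 2) (areas D))).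

(* Main.v *)
Require Import Defs.
From Stdlib Require Import Reals List Lra Psatz Classical IndefiniteDescription Arith.
From Coquelicot Require Import Coquelicot.
Import ListNotations.
Open Scope R_scope.
Notation lt_dec := Compare_dec.lt_dec.

Lemma rint_lin1 (c a b : R) : is_RInt (fun t => c * (t - a)) a b (c * (b - a)^2 / 2).
Proof.
  replace (c * (b - a)^2 / 2) with (minus ((fun t => c * (t - a)^2/2) b) ((fun t => c * (t - a)^2/2) a)).
  2:{ unfold minus, plus, opp; simpl; field. }
  apply (is_RInt_derive (fun t => c * (t - a)^2/2) (fun t => c * (t - a))).
  - intros x _. auto_derive; auto. simpl. field.
  - intros x _. apply (ex_derive_continuous (V:=R_CompleteNormedModule)). auto_derive; auto.
Qed.

Lemma rint_lin2 (c a b : R) : is_RInt (fun t => c * (b - t)) a b (c * (b - a)^2 / 2).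
Proof.
  replace (c * (b - a)^2 / 2) with (minus ((fun t => - (c * (b - t)^2/2)) b) ((fun t => - (c * (b - t)^2/2)) a)).
  2:{ unfold minus, plus, opp; simpl; field. }
  apply (is_RInt_derive (fun t => - (c * (b - t)^2/2)) (fun t => c * (b - t))).
  - intros x _. auto_derive; auto. simpl. field.
  - intros x _. apply (ex_derive_continuous (V:=R_CompleteNormedModule)). auto_derive; auto.
Qed.

Lemma rint_zero (h : R -> R) a b : a <= b -> (forall t, a < t < b -> h t = 0) -> is_RInt h a b 0.
Proof.
  intros Hab H. apply (is_RInt_ext (fun _ => 0)).
  { intros x Hx. rewrite Rmin_left in Hx by lra. rewrite Rmax_right in Hx by lra. symmetry; apply H; lra. }
  assert (K := is_RInt_const (V:=R_NormedModule) a b 0).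
  replace (scal (b - a) (0:R_NormedModule)) with 0 in K. exact K.
  unfold scal; simpl; unfold mult; simpl; ring.
Qed.

Lemma rint_piece (h : R -> R) x0 x1 x2 k :
 0 <= x0 -> x0 <= x1 -> x1 <= x2 -> x2 <= 1 ->
 (forall t, 0 < t < x0 -> h t = 0) ->
 (forall t, x0 < t < x1 -> h t = k/(x1-x0) * (t - x0)) ->
 (forall t, x1 < t < x2 -> h t = k/(x2-x1) * (x2 - t)) ->
 (forall t, x2 < t < 1 -> h t = 0) ->
 is_RInt h 0 1 (k * (x2 - x0) / 2).
Proof.
  intros h0 h1 h2 h3 H0 H1 H2 H3.
  assert (I1 : is_RInt h x0 x1 (k * (x1 - x0) / 2)).
  { destruct (Req_dec x0 x1) as [E|E].
    - subst. replace (k * (x1 - x1) / 2) with (@zero R_NormedModule).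
      apply is_RInt_point. unfold zero; simpl; field.
    - apply (is_RInt_ext (fun t => k/(x1-x0) * (t - x0))).
      { intros x Hx. rewrite Rmin_left in Hx by lra. rewrite Rmax_right in Hx by lra. symmetry; apply H1; lra. }
      replace (k * (x1 - x0) / 2) with (k/(x1-x0) * (x1 - x0)^2/2) by (field; lra).
      apply rint_lin1. }
  assert (I2 : is_RInt h x1 x2 (k * (x2 - x1) / 2)).
  { destruct (Req_dec x1 x2) as [E|E].
    - subst. replace (k * (x2 - x2) / 2) with (@zero R_NormedModule).
      apply is_RInt_point. unfold zero; simpl; field.
    - apply (is_RInt_ext (fun t => k/(x2-x1) * (x2 - t))).
      { intros x Hx. rewrite Rmin_left in Hx by lra. rewrite Rmax_right in Hx by lra. symmetry; apply H2; lra. }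
      replace (k * (x2 - x1) / 2) with (k/(x2-x1) * (x2 - x1)^2/2) by (field; lra).
      apply rint_lin2. }
  assert (I0 := rint_zero h 0 x0 h0 H0).
  assert (I3 := rint_zero h x2 1 h3 H3).
  assert (J := is_RInt_Chasles h _ _ _ _ _ (is_RInt_Chasles h _ _ _ _ _ (is_RInt_Chasles h _ _ _ _ _ I0 I1) I2) I3).
  replace (k * (x2 - x0) / 2) with (plus (plus (plus 0 (k * (x1 - x0) / 2)) (k * (x2 - x1) / 2)) 0). exact J.
  unfold plus; simpl. field.
Qed.

Lemma le_div_r (b u c : R) : 0 < c -> b * c <= u -> b <= u / c.
Proof. intros Hc H. replace b with ((b * c) / c) by (field; lra).
  unfold Rdiv. apply Rmult_le_compat_r. left; apply Rinv_0_lt_compat; lra. exact H. Qed.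
Lemma lt_div_r (b u c : R) : 0 < c -> b * c < u -> b < u / c.
Proof. intros Hc H. replace b with ((b * c) / c) by (field; lra).
  unfold Rdiv. apply Rmult_lt_compat_r. apply Rinv_0_lt_compat; lra. exact H. Qed.
Lemma div_lt_r (b u c : R) : 0 < c -> b < u / c -> b * c < u.
Proof. intros Hc H. replace u with ((u / c) * c) by (field; lra).
  apply Rmult_lt_compat_r; lra. Qed.
Lemma div_nonneg (u c : R) : 0 <= u -> 0 < c -> 0 <= u / c.
Proof. intros. unfold Rdiv. apply Rmult_le_pos; [lra| left; apply Rinv_0_lt_compat; lra]. Qed.
Lemma div_pos (u c : R) : 0 < u -> 0 < c -> 0 < u / c.
Proof. intros. unfold Rdiv. apply Rmult_lt_0_compat; [lra| apply Rinv_0_lt_compat; lra]. Qed.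
Lemma div_le1 (u c : R) : u <= c -> 0 < c -> u / c <= 1.
Proof. intros. replace 1 with (c / c) by (field; lra). unfold Rdiv. apply Rmult_le_compat_r.
  left; apply Rinv_0_lt_compat; lra. lra. Qed.

Definition gline (x0 y0 x2 y2 t : R) := y0 + (t - x0) * ((y2 - y0) / (x2 - x0)).

Lemma area_sorted x0 y0 x1 y1 x2 y2 :
  x0 < x2 ->
  tri_area ((x0,y0),(x1,y1),(x2,y2)) = Rabs (y1 - gline x0 y0 x2 y2 x1) * (x2 - x0) / 2.
Proof.
  intros H. unfold tri_area, gline.
  replace ((x1 - x0) * (y2 - y0) - (x2 - x0) * (y1 - y0)) with
    (- ((y1 - (y0 + (x1 - x0) * ((y2 - y0) / (x2 - x0)))) * (x2 - x0))) by (field; lra).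
  rewrite Rabs_Ropp, Rabs_mult, (Rabs_pos_eq (x2 - x0)) by lra. reflexivity.
Qed.

Definition phim (x0 x1 x2 t : R) : R :=
  if Rle_dec t x1 then (t - x0) / (x1 - x0) else (x2 - t) / (x2 - x1).
Definition phip (x0 x1 x2 t : R) : R :=
  if Rlt_dec t x1 then (t - x0) / (x1 - x0) else
  if Rlt_dec x1 t then (x2 - t) / (x2 - x1) else 1.

Definition tslice_ok (T : tri) (hp hm : R -> R) : Prop :=
   is_RInt hp 0 1 (tri_area T) /\ is_RInt hm 0 1 (tri_area T) /\
   (forall t, 0 <= hp t /\ exists a, forall y, in_closed_tri T (t,y) -> a <= y <= a + hp t) /\
   (forall t, 0 <= hm t /\ exists a, forall y, a < y < a + hm t -> in_open_tri T (t,y)).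

Lemma slice_sorted x0 y0 x1 y1 x2 y2 :
  0 <= x0 -> x0 <= x1 -> x1 <= x2 -> x2 <= 1 ->
  0 < tri_area ((x0,y0),(x1,y1),(x2,y2)) ->
  exists hp hm, tslice_ok ((x0,y0),(x1,y1),(x2,y2)) hp hm.
Proof.
  intros h0 h1 h2 h3 Hpos.
  assert (h02 : x0 < x2).
  { destruct (Rlt_dec x0 x2) as [|n]; auto. assert (x0 = x1) by lra. assert (x1 = x2) by lra. subst.
    unfold tri_area in Hpos. simpl in Hpos. replace ((x2 - x2) * (y2 - y0) - (x2 - x2) * (y1 - y0)) with 0 in Hpos by ring.
    rewrite Rabs_R0 in Hpos. lra. }
  rewrite area_sorted in Hpos by lra.
  set (g := gline x0 y0 x2 y2) in *.
  set (d := y1 - g x1) in *.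
  assert (dpos : 0 < Rabs d).
  { destruct (Rle_dec (Rabs d) 0); [|lra]. assert (Rabs d * (x2 - x0) <= 0) by nra. lra. }
  exists (fun t => if Rle_dec x0 t then if Rle_dec t x2 then Rabs d * phip x0 x1 x2 t else 0 else 0).
  exists (fun t => if Rlt_dec x0 t then if Rlt_dec t x2 then Rabs d * phim x0 x1 x2 t else 0 else 0).
  unfold tslice_ok. rewrite area_sorted by lra. fold g. fold d.
  split; [|split; [|split]].
  - apply (rint_piece _ x0 x1 x2); auto; intros t Ht;
      repeat (first [destruct (Rle_dec _ _) | destruct (Rlt_dec _ _)]; try lra); unfold phip;
      repeat (first [destruct (Rle_dec _ _) | destruct (Rlt_dec _ _)]; try lra); unfold Rdiv; ring.
  - apply (rint_piece _ x0 x1 x2); auto; intros t Ht;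
      repeat (first [destruct (Rle_dec _ _) | destruct (Rlt_dec _ _)]; try lra); unfold phim;
      repeat (first [destruct (Rle_dec _ _) | destruct (Rlt_dec _ _)]; try lra); unfold Rdiv; ring.
  - intros t.
    assert (phinn : x0 <= t <= x2 -> 0 <= phip x0 x1 x2 t).
    { intros Ht. unfold phip. repeat (first [destruct (Rle_dec _ _) | destruct (Rlt_dec _ _)]); try lra;
      apply div_nonneg; lra. }
    split.
    + repeat (first [destruct (Rle_dec _ _) | destruct (Rlt_dec _ _)]); try lra.
      apply Rmult_le_pos; [apply Rabs_pos | apply phinn; lra].
    + exists (g t + Rmin 0 (d * phip x0 x1 x2 t)). intros y Hy.
      destruct Hy as (a&b&c&Ha&Hb&Hc&Hs&Ht&Hy). simpl in Ht, Hy.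
      assert (key : y = g t + b * d).
      { rewrite Ht, Hy. unfold d, g, gline. replace a with (1 - b - c) by lra. field. lra. }
      assert (E1 : t - x0 = b*(x1-x0) + c*(x2-x0)) by (rewrite Ht; replace a with (1 - b - c) by lra; ring).
      assert (E2 : x2 - t = a*(x2-x0) + b*(x2-x1)) by (rewrite Ht; replace c with (1 - b - a) by lra; ring).
      assert (P1 : 0 <= b*(x1-x0)) by (apply Rmult_le_pos; lra).
      assert (P2 : 0 <= c*(x2-x0)) by (apply Rmult_le_pos; lra).
      assert (P3 : 0 <= a*(x2-x0)) by (apply Rmult_le_pos; lra).
      assert (P4 : 0 <= b*(x2-x1)) by (apply Rmult_le_pos; lra).
      assert (bphi : b <= phip x0 x1 x2 t).
      { unfold phip. repeat (first [destruct (Rle_dec _ _) | destruct (Rlt_dec _ _)]); try lra.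
        - apply le_div_r; lra.
        - apply le_div_r; lra. }
      assert (Hphi := phinn ltac:(lra)).
      repeat (first [destruct (Rle_dec _ _) | destruct (Rlt_dec _ _)]); try lra.
      set (ph := phip x0 x1 x2 t) in *. rewrite key.
      destruct (Rle_dec 0 d).
      * rewrite Rmin_left by (apply Rmult_le_pos; lra). rewrite Rabs_pos_eq by lra.
        assert (b * d <= ph * d) by (apply Rmult_le_compat_r; lra).
        assert (0 <= b * d) by (apply Rmult_le_pos; lra). lra.
      * rewrite Rmin_right by (assert (0 <= ph * (-d)) by (apply Rmult_le_pos; lra); lra).
        rewrite Rabs_left by lra.
        assert (b * (-d) <= ph * (-d)) by (apply Rmult_le_compat_r; lra).
        assert (0 <= b * (-d)) by (apply Rmult_le_pos; lra). lra.
  - intros t.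
    assert (phipos : x0 < t < x2 -> 0 < phim x0 x1 x2 t).
    { intros Ht. unfold phim. destruct (Rle_dec t x1); apply div_pos; lra. }
    split.
    + repeat (first [destruct (Rle_dec _ _) | destruct (Rlt_dec _ _)]); try lra.
      apply Rmult_le_pos; [apply Rabs_pos | left; apply phipos; lra].
    + exists (g t + Rmin 0 (d * phim x0 x1 x2 t)). intros y Hy.
      destruct (Rlt_dec x0 t) as [Ht0|Ht0]; [|lra].
      destruct (Rlt_dec t x2) as [Ht2|Ht2]; [|lra].
      assert (Hph := phipos (conj Ht0 Ht2)).
      assert (bnd : (x1 - x0 > 0 /\ t <= x1 /\ phim x0 x1 x2 t = (t - x0)/(x1 - x0)) \/
                    (x2 - x1 > 0 /\ x1 < t /\ phim x0 x1 x2 t = (x2 - t)/(x2 - x1))).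
      { unfold phim. destruct (Rle_dec t x1); [left|right]; repeat split; lra. }
      set (ph := phim x0 x1 x2 t) in *.
      assert (dn0 : d <> 0) by (intro E; rewrite E, Rabs_R0 in dpos; lra).
      set (b := (y - g t) / d).
      assert (yb : y = g t + b * d) by (unfold b; field; auto).
      assert (Hb : 0 < b < ph).
      { destruct (Rle_dec 0 d).
        - rewrite Rmin_left in Hy by (apply Rmult_le_pos; lra). rewrite Rabs_pos_eq in Hy by lra.
          assert (0 < d) by lra. rewrite yb in Hy. split; nra.
        - rewrite Rmin_right in Hy by (assert (0 <= ph * (-d)) by (apply Rmult_le_pos; lra); lra).
          rewrite Rabs_left in Hy by lra. rewrite yb in Hy. split; nra. }
      pose (c := (t - x0 - b*(x1-x0)) / (x2 - x0)).
      pose (a := 1 - b - c).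
      assert (Ea : a * (x2 - x0) = x2 - t - b*(x2-x1)) by (unfold a, c; field; lra).
      assert (Ec : c * (x2 - x0) = t - x0 - b*(x1-x0)) by (unfold c; field; lra).
      assert (Hc : 0 < c).
      { unfold c; apply div_pos; [|lra].
        destruct bnd as [(B1&B2&B3)|(B1&B2&B3)]; rewrite B3 in Hb.
        - assert (b * (x1-x0) < t - x0) by (apply div_lt_r; lra). lra.
        - assert (b * (x2-x1) < x2 - t) by (apply div_lt_r; lra).
          assert (b < 1) by nra. nra. }
      assert (Ha : 0 < a).
      { assert (0 < a * (x2 - x0)).
        { rewrite Ea. destruct bnd as [(B1&B2&B3)|(B1&B2&B3)]; rewrite B3 in Hb.
          - assert (b * (x1-x0) < t - x0) by (apply div_lt_r; lra).
            assert (b < 1) by nra. nra.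
          - assert (b * (x2-x1) < x2 - t) by (apply div_lt_r; lra). lra. }
        nra. }
      exists a, b, c. split; [lra|split; [lra|split; [lra|split; [unfold a; ring|]]]].
      simpl. split.
      * unfold a, c. field. lra.
      * rewrite yb. unfold a, c, d, g, gline. field. lra.
Qed.

Definition teq (T T' : tri) : Prop :=
  tri_area T = tri_area T' /\ (forall p, in_closed_tri T p <-> in_closed_tri T' p) /\
  (forall p, in_open_tri T p <-> in_open_tri T' p).

Lemma teq_sym T T' : teq T T' -> teq T' T.
Proof. intros (H1&H2&H3). split; [auto|split; intro p; [rewrite H2|rewrite H3]; tauto]. Qed.
Lemma teq_trans T1 T2 T3 : teq T1 T2 -> teq T2 T3 -> teq T1 T3.
Proof. intros (H1&H2&H3) (K1&K2&K3). split; [congruence|split; intro p; [rewrite H2|rewrite H3]; auto]. Qed.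

Lemma teq_sw12 (A B C : point) : teq ((A,B),C) ((B,A),C).
Proof.
  destruct A as [xa ya], B as [xb yb], C as [xc yc]. split; [|split].
  - unfold tri_area. f_equal. rewrite <- Rabs_Ropp. f_equal. ring.
  - intros p; simpl; split; intros (a&b&c&H1&H2&H3&H4&H5&H6); exists b, a, c; repeat split; lra.
  - intros p; simpl; split; intros (a&b&c&H1&H2&H3&H4&H5&H6); exists b, a, c; repeat split; lra.
Qed.
Lemma teq_sw23 (A B C : point) : teq ((A,B),C) ((A,C),B).
Proof.
  destruct A as [xa ya], B as [xb yb], C as [xc yc]. split; [|split].
  - unfold tri_area. f_equal. rewrite <- Rabs_Ropp. f_equal. ring.
  - intros p; simpl; split; intros (a&b&c&H1&H2&H3&H4&H5&H6); exists a, c, b; repeat split; lra.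
  - intros p; simpl; split; intros (a&b&c&H1&H2&H3&H4&H5&H6); exists a, c, b; repeat split; lra.
Qed.

Lemma tslice_teq T T' hp hm : teq T T' -> tslice_ok T hp hm -> tslice_ok T' hp hm.
Proof.
  intros (H1&H2&H3) (K1&K2&K3&K4). rewrite H1 in K1, K2. split; [auto|split; [auto|split]].
  - intros t. destruct (K3 t) as (P&a&Q). split; auto. exists a. intros y Hy. apply Q, H2, Hy.
  - intros t. destruct (K4 t) as (P&a&Q). split; auto. exists a. intros y Hy. apply H3, Q, Hy.
Qed.

Lemma slice_any (A B C : point) :
  0 <= fst A <= 1 -> 0 <= fst B <= 1 -> 0 <= fst C <= 1 ->
  0 < tri_area ((A,B),C) -> exists hp hm, tslice_ok ((A,B),C) hp hm.
Proof.
  intros HA HB HC Hp.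
  assert (G : forall T, teq ((A,B),C) T -> (forall hp hm, tslice_ok T hp hm -> tslice_ok ((A,B),C) hp hm)).
  { intros T E hp hm. apply tslice_teq, teq_sym, E. }
  destruct A as [xa ya], B as [xb yb], C as [xc yc]; simpl in HA, HB, HC.
  destruct (Rle_dec xa xb), (Rle_dec xb xc), (Rle_dec xa xc).
  all: try (exfalso; lra).
  all: first
   [ (destruct (slice_sorted xa ya xb yb xc yc) as (hp&hm&H); try assumption; try lra;
       [exists hp, hm; exact H])
   | (destruct (slice_sorted xa ya xc yc xb yb) as (hp&hm&H); try assumption; try lra;
       [ assert (E := teq_sw23 (xa,ya) (xb,yb) (xc,yc)); destruct E as (E&_); eapply Rlt_le_trans; [exact Hp | right; exact E]
       | exists hp, hm; apply (G _ (teq_sw23 _ _ _)), H])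
   | (destruct (slice_sorted xb yb xa ya xc yc) as (hp&hm&H); try assumption; try lra;
       [ assert (E := teq_sw12 (xa,ya) (xb,yb) (xc,yc)); destruct E as (E&_); eapply Rlt_le_trans; [exact Hp | right; exact E]
       | exists hp, hm; apply (G _ (teq_sw12 _ _ _)), H])
   | (destruct (slice_sorted xb yb xc yc xa ya) as (hp&hm&H); try assumption; try lra;
       [ assert (E := teq_trans _ _ _ (teq_sw12 (xa,ya) (xb,yb) (xc,yc)) (teq_sw23 _ _ _)); destruct E as (E&_); eapply Rlt_le_trans; [exact Hp | right; exact E]
       | exists hp, hm; apply (G _ (teq_trans _ _ _ (teq_sw12 _ _ _) (teq_sw23 _ _ _))), H])
   | (destruct (slice_sorted xc yc xa ya xb yb) as (hp&hm&H); try assumption; try lra;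
       [ assert (E := teq_trans _ _ _ (teq_sw23 (xa,ya) (xb,yb) (xc,yc)) (teq_sw12 _ _ _)); destruct E as (E&_); eapply Rlt_le_trans; [exact Hp | right; exact E]
       | exists hp, hm; apply (G _ (teq_trans _ _ _ (teq_sw23 _ _ _) (teq_sw12 _ _ _))), H])
   | (destruct (slice_sorted xc yc xb yb xa ya) as (hp&hm&H); try assumption; try lra;
       [ assert (E := teq_trans _ _ _ (teq_trans _ _ _ (teq_sw12 (xa,ya) (xb,yb) (xc,yc)) (teq_sw23 _ _ _)) (teq_sw12 _ _ _)); destruct E as (E&_); eapply Rlt_le_trans; [exact Hp | right; exact E]
       | exists hp, hm; apply (G _ (teq_trans _ _ _ (teq_trans _ _ _ (teq_sw12 _ _ _) (teq_sw23 _ _ _)) (teq_sw12 _ _ _))), H]) ].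
Qed.


Lemma sumR_app l1 l2 : sumR (l1 ++ l2) = sumR l1 + sumR l2.
Proof. induction l1; simpl; [ring| rewrite IHl1; ring]. Qed.

Lemma sumR_nonneg (l : list R) : (forall x, In x l -> 0 <= x) -> 0 <= sumR l.
Proof. induction l; simpl; intros H; [lra|]. assert (0 <= a) by auto. assert (0 <= sumR l) by auto. lra. Qed.

Lemma cover1d_n n : forall (L : list (R*R)), (length L <= n)%nat -> forall u v, u <= v ->
  (forall p, In p L -> 0 <= snd p) ->
  (forall x, u <= x <= v -> exists p, In p L /\ fst p <= x <= fst p + snd p) ->
  v - u <= sumR (map snd L).
Proof.
  induction n as [|n IH]; intros L HL u v Huv Hnn Hc.
  - destruct L; [|simpl in HL; lia]. destruct (Hc u) as (p&[]&_). lra.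
  - destruct (Hc u) as ((a,l)&Hin&Hp); [lra|]. simpl in Hp.
    destruct (in_split _ _ Hin) as (L1&L2&E). subst L.
    rewrite map_app, sumR_app. simpl.
    assert (S0 : 0 <= sumR (map snd L1) + sumR (map snd L2)).
    { rewrite <- sumR_app, <- map_app. apply sumR_nonneg. intros x Hx. apply in_map_iff in Hx.
      destruct Hx as (q&<-&Hq). apply Hnn. apply in_app_or in Hq. apply in_or_app. simpl. tauto. }
    destruct (Rle_dec v (a + l)) as [Hv|Hv]; [lra|].
    remember (sumR (map snd L1) + sumR (map snd L2)) as s eqn:Es.
    destruct (Rle_dec (v - (a + l)) s) as [Hs|Hs]; [lra|].
    exfalso.
    set (w := (a + l + v - s) / 2).
    assert (K : v - w <= sumR (map snd (L1 ++ L2))).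
    { apply IH.
      - rewrite app_length in *. simpl in HL. lia.
      - unfold w; lra.
      - intros p Hq. apply Hnn. apply in_app_or in Hq. apply in_or_app. simpl. tauto.
      - intros x Hx. destruct (Hc x) as (q&Hq&Hq2); [unfold w in Hx; lra|].
        apply in_app_or in Hq. destruct Hq as [Hq|[Hq|Hq]].
        + exists q. split; auto. apply in_or_app; auto.
        + subst q. simpl in Hq2. unfold w in Hx. lra.
        + exists q. split; auto. apply in_or_app; auto. }
    rewrite map_app, sumR_app, <- Es in K. unfold w in K. lra.
Qed.

Definition odisj (p q : R*R) : Prop :=
  forall y, ~ (fst p < y < fst p + snd p /\ fst q < y < fst q + snd q).

Lemma odisj_split (p q : R*R) : 0 < snd p -> 0 < snd q -> odisj p q ->
  fst q + snd q <= fst p \/ fst p + snd p <= fst q.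
Proof.
  destruct p as (a,l), q as (c,m); simpl. intros H1 H2 H.
  destruct (Rle_dec (c + m) a); [left; auto|]. destruct (Rle_dec (a + l) c); [right; auto|].
  exfalso. apply (H ((Rmax a c + Rmin (a+l) (c+m))/2)). simpl.
  unfold Rmax, Rmin. repeat destruct (Rle_dec _ _); lra.
Qed.

Lemma sumR_filter (f : R*R -> bool) L :
  sumR (map snd L) = sumR (map snd (filter f L)) + sumR (map snd (filter (fun x => negb (f x)) L)).
Proof. induction L as [|x L IH]; simpl; [ring|]. destruct (f x); simpl; rewrite IH; ring. Qed.

Lemma FOP_filter {A} (R : A -> A -> Prop) (f : A -> bool) L :
  ForallOrdPairs R L -> ForallOrdPairs R (filter f L).
Proof.
  induction 1 as [|a l Ha Hl IH]; simpl; [constructor|]. destruct (f a); auto.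
  constructor; auto. rewrite Forall_forall in *. intros x Hx. apply filter_In in Hx. apply Ha; tauto.
Qed.

Lemma pack1d_n n : forall (L : list (R*R)), (length L <= n)%nat -> forall u v, u <= v ->
  (forall p, In p L -> 0 <= snd p) ->
  (forall p, In p L -> forall y, fst p < y < fst p + snd p -> u <= y <= v) ->
  ForallOrdPairs odisj L ->
  sumR (map snd L) <= v - u.
Proof.
  induction n as [|n IH]; intros L HL u v Huv Hnn Hin Hd.
  - destruct L; [simpl; lra|simpl in HL; lia].
  - destruct L as [|(a,l) L]; [simpl; lra|]. simpl.
    inversion Hd as [|x y Hd1 Hd2]; subst.
    assert (Hnn' : forall p, In p L -> 0 <= snd p) by (intros; apply Hnn; simpl; auto).
    assert (Hin' : forall p, In p L -> forall y, fst p < y < fst p + snd p -> u <= y <= v)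
      by (intros; eapply Hin; [simpl; right|]; eauto).
    assert (Hl : 0 <= l) by (apply (Hnn (a,l)); simpl; auto).
    simpl in HL.
    destruct (Req_dec l 0) as [E|E].
    { subst l. assert (sumR (map snd L) <= v - u) by (apply IH; auto; lia). lra. }
    assert (Ha : u <= a).
    { destruct (Rle_dec u a); auto. exfalso.
      assert (K := Hin (a,l) (or_introl eq_refl) ((a + Rmin (a+l) u)/2)). simpl in K.
      unfold Rmin in K; destruct (Rle_dec _ _) in K; lra. }
    assert (Hb : a + l <= v).
    { destruct (Rle_dec (a+l) v); auto. exfalso.
      assert (K := Hin (a,l) (or_introl eq_refl) ((a + l + Rmax a v)/2)). simpl in K.
      unfold Rmax in K; destruct (Rle_dec _ _) in K; lra. }
    set (f := fun q : R*R => if Rle_dec (fst q + snd q) a then true else false).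
    rewrite (sumR_filter f).
    assert (S1 : sumR (map snd (filter f L)) <= a - u).
    { apply IH; auto.
      - assert (Hf := filter_length_le f L). lia.
      - intros p Hp. apply filter_In in Hp. apply Hnn'; tauto.
      - intros p Hp y Hy. apply filter_In in Hp. destruct Hp as (Hp&Hf).
        unfold f in Hf. destruct (Rle_dec _ _) in Hf; [|discriminate].
        assert (K := Hin' p Hp y Hy). lra.
      - apply FOP_filter; auto. }
    assert (S2 : sumR (map snd (filter (fun x => negb (f x)) L)) <= v - (a + l)).
    { apply IH; auto.
      - assert (Hf := filter_length_le (fun x => negb (f x)) L). lia.
      - intros p Hp. apply filter_In in Hp. apply Hnn'; tauto.
      - intros p Hp y Hy. apply filter_In in Hp. destruct Hp as (Hp&Hf).
        unfold f in Hf. destruct (Rle_dec _ _) in Hf; [discriminate|].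
        assert (K := Hin' p Hp y Hy).
        assert (Hq : 0 < snd p) by (assert (0 <= snd p) by auto; lra).
        rewrite Forall_forall in Hd1.
        destruct (odisj_split (a,l) p) as [Z|Z]; simpl in *; try lra; auto.
      - apply FOP_filter; auto. }
    lra.
Qed.


Lemma FOP_of_nth {A} (R : A -> A -> Prop) (d : A) L :
  (forall i j, (i < length L)%nat -> (j < length L)%nat -> i <> j -> R (nth i L d) (nth j L d)) ->
  ForallOrdPairs R L.
Proof.
  induction L as [|a l IH]; intros H; constructor.
  - rewrite Forall_forall. intros x Hx. destruct (In_nth l x d Hx) as (k&Hk&<-).
    apply (H 0%nat (S k)); simpl; lia.
  - apply IH. intros i j Hi Hj Hij. apply (H (S i) (S j)); simpl; lia.
Qed.

Lemma FOP_map {A B} (R1 : A -> A -> Prop) (R2 : B -> B -> Prop) (f : A -> B) L :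
  ForallOrdPairs R1 L -> (forall x y, In x L -> In y L -> R1 x y -> R2 (f x) (f y)) ->
  ForallOrdPairs R2 (map f L).
Proof.
  induction 1 as [|a l Ha Hl IH]; intros H; simpl; constructor.
  - rewrite Forall_forall in *. intros z Hz. apply in_map_iff in Hz. destruct Hz as (x&<-&Hx).
    apply H; simpl; auto.
  - apply IH. intros; apply H; simpl; auto.
Qed.

Lemma rint_sum (F : tri -> R -> R) L :
  (forall T, In T L -> is_RInt (F T) 0 1 (tri_area T)) ->
  is_RInt (fun t => sumR (map (fun T => F T t) L)) 0 1 (sumR (map tri_area L)).
Proof.
  induction L as [|T L IH]; intros H; simpl.
  - apply (rint_zero (fun _ => 0)); [lra|auto].
  - apply (is_RInt_plus (V:=R_NormedModule)); [apply H; simpl; auto|apply IH; intros; apply H; simpl; auto].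
Qed.

Lemma open_closed T p : in_open_tri T p -> in_closed_tri T p.
Proof. destruct T as ((A,B),C); simpl. intros (a&b&c&H). exists a,b,c. repeat split; lra. Qed.

Lemma area_sum D : is_dissection in_unit_square D -> sumR (areas D) = 1.
Proof.
  intros (Hpos&Hdisj&Hcov).
  assert (Hvert : forall A B C, In ((A,B),C) D -> 0 <= fst A <= 1 /\ 0 <= fst B <= 1 /\ 0 <= fst C <= 1).
  { intros A B C HT.
    assert (K : forall p, in_closed_tri ((A,B),C) p -> 0 <= fst p <= 1).
    { intros p Hp. assert (Q : in_unit_square p) by (apply Hcov; eauto). apply Q. }
    split; [|split]; apply K; simpl.
    - exists 1, 0, 0. repeat split; lra.
    - exists 0, 1, 0. repeat split; lra.
    - exists 0, 0, 1. repeat split; lra. }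
  assert (H : forall T, exists p : (R -> R) * (R -> R), In T D -> tslice_ok T (fst p) (snd p)).
  { intros T. destruct (classic (In T D)) as [HT|HT].
    - destruct T as ((A,B),C). destruct (Hvert A B C HT) as (h1&h2&h3).
      destruct (slice_any A B C h1 h2 h3 (Hpos _ HT)) as (hp&hm&K). exists (hp,hm). auto.
    - exists (fun _ => 0, fun _ => 0). tauto. }
  pose (HPM := fun T => proj1_sig (constructive_indefinite_description _ (H T))).
  assert (HS : forall T, In T D -> tslice_ok T (fst (HPM T)) (snd (HPM T))).
  { intros T. unfold HPM. destruct (constructive_indefinite_description _ (H T)). auto. }
  pose (HP := fun T => fst (HPM T)). pose (HM := fun T => snd (HPM T)).
  assert (HA : forall T t, exists a, In T D -> forall y, in_closed_tri T (t,y) -> a <= y <= a + HP T t).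
  { intros T t. destruct (classic (In T D)) as [HT|HT].
    - destruct (HS T HT) as (_&_&K&_). destruct (K t) as (_&a&Ka). exists a. auto.
    - exists 0. tauto. }
  assert (HB : forall T t, exists a, In T D -> forall y, a < y < a + HM T t -> in_open_tri T (t,y)).
  { intros T t. destruct (classic (In T D)) as [HT|HT].
    - destruct (HS T HT) as (_&_&_&K). destruct (K t) as (_&a&Ka). exists a. auto.
    - exists 0. tauto. }
  pose (AP := fun T t => proj1_sig (constructive_indefinite_description _ (HA T t))).
  pose (AM := fun T t => proj1_sig (constructive_indefinite_description _ (HB T t))).
  assert (HAP : forall T t, In T D -> forall y, in_closed_tri T (t,y) -> AP T t <= y <= AP T t + HP T t).
  { intros T t. unfold AP. destruct (constructive_indefinite_description _ (HA T t)). auto. }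
  assert (HAM : forall T t, In T D -> forall y, AM T t < y < AM T t + HM T t -> in_open_tri T (t,y)).
  { intros T t. unfold AM. destruct (constructive_indefinite_description _ (HB T t)). auto. }
  assert (IP : is_RInt (fun t => sumR (map (fun T => HP T t) D)) 0 1 (sumR (areas D))).
  { apply rint_sum. intros T HT. apply (HS T HT). }
  assert (IM : is_RInt (fun t => sumR (map (fun T => HM T t) D)) 0 1 (sumR (areas D))).
  { apply rint_sum. intros T HT. apply (HS T HT). }
  assert (I1 : is_RInt (fun _ => 1) 0 1 1).
  { assert (K := is_RInt_const (V:=R_NormedModule) 0 1 1).
    replace (scal (1 - 0) (1:R_NormedModule)) with 1 in K. exact K.
    unfold scal; simpl; unfold mult; simpl; ring. }
  apply Rle_antisym.
  - apply (is_RInt_le _ _ 0 1 _ _ ltac:(lra) IM I1).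
    intros t Ht.
    replace (sumR (map (fun T => HM T t) D)) with (sumR (map snd (map (fun T => (AM T t, HM T t)) D)))
      by (rewrite map_map; reflexivity).
    replace 1 with (1 - 0) by ring.
    apply (pack1d_n (length (map (fun T => (AM T t, HM T t)) D))); auto; try lra.
    + intros p Hp. apply in_map_iff in Hp. destruct Hp as (T&<-&HT). simpl.
      destruct (HS T HT) as (_&_&_&K). apply (K t).
    + intros p Hp y Hy. apply in_map_iff in Hp. destruct Hp as (T&<-&HT). simpl in Hy.
      assert (Q : in_unit_square (t,y)) by (apply Hcov; exists T; split; auto; apply open_closed, HAM; auto).
      apply Q.
    + apply (FOP_map (fun T T' => forall p, ~ (in_open_tri T p /\ in_open_tri T' p))).
      * apply (FOP_of_nth _ ((0,0),(0,0),(0,0))). intros i j Hi Hj Hij p. apply (Hdisj i j Hi Hj Hij p).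
      * intros T T' HT HT' K y (Y1&Y2). simpl in Y1, Y2. apply (K (t,y)). split; apply HAM; auto.
  - apply (is_RInt_le _ _ 0 1 _ _ ltac:(lra) I1 IP).
    intros t Ht.
    replace (sumR (map (fun T => HP T t) D)) with (sumR (map snd (map (fun T => (AP T t, HP T t)) D)))
      by (rewrite map_map; reflexivity).
    replace 1 with (1 - 0) by ring.
    apply (cover1d_n (length (map (fun T => (AP T t, HP T t)) D))); auto; try lra.
    + intros p Hp. apply in_map_iff in Hp. destruct Hp as (T&<-&HT). simpl.
      destruct (HS T HT) as (_&_&K&_). apply (K t).
    + intros y Hy. assert (Q : in_unit_square (t,y)) by (split; simpl; lra).
      apply Hcov in Q. destruct Q as (T&HT&Hc).
      exists (AP T t, HP T t). split; [apply (in_map (fun T => (AP T t, HP T t))); auto|]. simpl. apply HAP; auto.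
Qed.


Definition scale_pt (c : R) (p : point) : point := (c * fst p, snd p).
Definition scale_tri (c : R) (T : tri) : tri :=
  ((scale_pt c (fst (fst T)), scale_pt c (snd (fst T))), scale_pt c (snd T)).

Lemma area_scale c T : 0 <= c -> tri_area (scale_tri c T) = c * tri_area T.
Proof.
  intros Hc. destruct T as (([xa ya],[xb yb]),[xc yc]). unfold scale_tri, scale_pt, tri_area; simpl.
  replace ((c * xb - c * xa) * (yc - ya) - (c * xc - c * xa) * (yb - ya)) with
    (c * ((xb - xa) * (yc - ya) - (xc - xa) * (yb - ya))) by ring.
  rewrite Rabs_mult, (Rabs_pos_eq c) by lra. field.
Qed.

Lemma closed_scale_inv c T x y : 0 < c -> in_closed_tri (scale_tri c T) (x, y) -> in_closed_tri T (x / c, y).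
Proof.
  intros Hc. destruct T as (([xa ya],[xb yb]),[xc yc]). unfold scale_tri, scale_pt; simpl.
  intros (a&b&d&H1&H2&H3&H4&H5&H6). exists a, b, d. repeat split; auto.
  rewrite H5. field. lra.
Qed.

Lemma closed_scale c T x y : in_closed_tri T (x, y) -> in_closed_tri (scale_tri c T) (c * x, y).
Proof.
  destruct T as (([xa ya],[xb yb]),[xc yc]). unfold scale_tri, scale_pt; simpl.
  intros (a&b&d&H1&H2&H3&H4&H5&H6). exists a, b, d. repeat split; auto.
  rewrite H5. ring.
Qed.

Lemma open_scale_inv c T x y : 0 < c -> in_open_tri (scale_tri c T) (x, y) -> in_open_tri T (x / c, y).
Proof.
  intros Hc. destruct T as (([xa ya],[xb yb]),[xc yc]). unfold scale_tri, scale_pt; simpl.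
  intros (a&b&d&H1&H2&H3&H4&H5&H6). exists a, b, d. repeat split; auto.
  rewrite H5. field. lra.
Qed.

Lemma open_closed' T p : in_open_tri T p -> in_closed_tri T p.
Proof. destruct T as ((A,B),C); simpl. intros (a&b&c&H). exists a,b,c. repeat split; lra. Qed.

Definition t1 (c : R) : tri := (((c,0),(1,0)),(1,1)).
Definition t2 (c : R) : tri := (((c,0),(1,1)),(c,1)).

Lemma area_t1 c : c <= 1 -> tri_area (t1 c) = (1 - c) / 2.
Proof. intros. unfold tri_area, t1. f_equal. rewrite Rabs_pos_eq; ring_simplify; lra. Qed.
Lemma area_t2 c : c <= 1 -> tri_area (t2 c) = (1 - c) / 2.
Proof. intros. unfold tri_area, t2. f_equal. rewrite Rabs_pos_eq; ring_simplify; lra. Qed.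

Lemma open_t1_right c p : c < 1 -> in_open_tri (t1 c) p -> c < fst p /\ (fst p - c) - snd p * (1 - c) > 0.
Proof.
  intros Hc. destruct p as [x y]; simpl. intros (a&b&d&H1&H2&H3&H4&H5&H6).
  rewrite H5, H6. replace a with (1 - b - d) by lra. split; nra.
Qed.
Lemma open_t2_right c p : c < 1 -> in_open_tri (t2 c) p -> c < fst p /\ (fst p - c) - snd p * (1 - c) < 0.
Proof.
  intros Hc. destruct p as [x y]; simpl. intros (a&b&d&H1&H2&H3&H4&H5&H6).
  rewrite H5, H6. replace a with (1 - b - d) by lra. split; nra.
Qed.

Lemma nth_D' D c k d :
  nth k (map (scale_tri c) D ++ [t1 c; t2 c]) d =
  if lt_dec k (length D) then scale_tri c (nth k D d)
  else if Nat.eq_dec k (length D) then t1 c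
  else if Nat.eq_dec k (S (length D)) then t2 c else d.
Proof.
  destruct (lt_dec k (length D)) as [H|H].
  - rewrite app_nth1 by (rewrite length_map; auto).
    rewrite (nth_indep _ d (scale_tri c d)) by (rewrite length_map; auto).
    apply map_nth.
  - rewrite app_nth2 by (rewrite length_map; lia). rewrite length_map.
    destruct (Nat.eq_dec k (length D)) as [E|E].
    + subst. rewrite Nat.sub_diag. reflexivity.
    + destruct (Nat.eq_dec k (S (length D))) as [E2|E2].
      * subst. replace (S (length D) - length D)%nat with 1%nat by lia. reflexivity.
      * destruct (k - length D)%nat as [|[|m]] eqn:Z; try lia. simpl. destruct m; reflexivity.
Qed.

Lemma dissect' D c : is_dissection in_unit_square D -> 0 < c < 1 ->
  is_dissection in_unit_square (map (scale_tri c) D ++ [t1 c; t2 c]).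
Proof.
  intros (Hpos&Hdisj&Hcov) Hc.
  assert (Sq : forall T x y, In T D -> in_closed_tri T (x, y) -> 0 <= x <= 1 /\ 0 <= y <= 1).
  { intros T x y HT H. assert (Q : in_unit_square (x,y)) by (apply Hcov; eauto). apply Q. }
  assert (Left : forall T x y, In T D -> in_open_tri (scale_tri c T) (x, y) -> x <= c).
  { intros T x y HT H. apply open_scale_inv in H; [|lra]. apply open_closed' in H.
    destruct (Sq _ _ _ HT H) as ((Q1&Q2)&_).
    assert (x = (x / c) * c) by (field; lra). nra. }
  split; [|split].
  - intros T HT. apply in_app_or in HT. destruct HT as [HT|HT].
    + apply in_map_iff in HT. destruct HT as (T0&<-&HT0). rewrite area_scale by lra.
      apply Rmult_lt_0_compat; [lra|auto].
    + destruct HT as [<-|[<-|[]]]; [rewrite area_t1|rewrite area_t2]; lra.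
  - intros i j Hi Hj Hij [x y] [Oi Oj].
    rewrite length_app, length_map in Hi, Hj. simpl in Hi, Hj.
    rewrite nth_D' in Oi, Oj.
    destruct (lt_dec i (length D)) as [Li|Li]; destruct (lt_dec j (length D)) as [Lj|Lj].
    + apply open_scale_inv in Oi; [|lra]. apply open_scale_inv in Oj; [|lra].
      apply (Hdisj i j Li Lj Hij (x / c, y)). split; auto.
    + assert (x <= c) by exact (Left _ x y (nth_In _ _ Li) Oi).
      destruct (Nat.eq_dec j (length D)); [apply open_t1_right in Oj; simpl in Oj; lra|].
      destruct (Nat.eq_dec j (S (length D))); [apply open_t2_right in Oj; simpl in Oj; lra|lia].
    + assert (x <= c) by exact (Left _ x y (nth_In _ _ Lj) Oj).
      destruct (Nat.eq_dec i (length D)); [apply open_t1_right in Oi; simpl in Oi; lra|].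
      destruct (Nat.eq_dec i (S (length D))); [apply open_t2_right in Oi; simpl in Oi; lra|lia].
    + destruct (Nat.eq_dec i (length D)); destruct (Nat.eq_dec j (length D)); try lia;
      destruct (Nat.eq_dec i (S (length D))); destruct (Nat.eq_dec j (S (length D))); try lia.
      * apply open_t1_right in Oi; apply open_t2_right in Oj; simpl in *; lra.
      * apply open_t2_right in Oi; apply open_t1_right in Oj; simpl in *; lra.
  - intros [x y]. split.
    + intros (Hx&Hy). simpl in Hx, Hy.
      destruct (Rle_dec x c) as [Hxc|Hxc].
      * assert (Q : in_unit_square (x / c, y)).
        { split; simpl; auto. split. apply Rmult_le_pos; [lra|left; apply Rinv_0_lt_compat; lra].
          replace 1 with (c / c) by (field; lra). unfold Rdiv. apply Rmult_le_compat_r; [left; apply Rinv_0_lt_compat|]; lra. }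
        apply Hcov in Q. destruct Q as (T&HT&HC).
        exists (scale_tri c T). split; [apply in_or_app; left; apply in_map; auto|].
        replace x with (c * (x / c)) by (field; lra). apply closed_scale, HC.
      * set (u := (x - c) / (1 - c)).
        assert (Eu : u * (1 - c) = x - c) by (unfold u; field; lra).
        assert (u0 : 0 <= u) by nra. assert (u1 : u <= 1) by nra.
        destruct (Rle_dec y u) as [Hyu|Hyu].
        -- exists (t1 c). split; [apply in_or_app; right; simpl; auto|].
           simpl. exists (1 - u), (u - y), y. repeat split; try lra; nra.
        -- exists (t2 c). split; [apply in_or_app; right; simpl; auto|].
           simpl. exists (1 - y), u, (y - u). repeat split; try lra; nra.
    + intros (T&HT&HC). apply in_app_or in HT. destruct HT as [HT|HT].
      * apply in_map_iff in HT. destruct HT as (T0&<-&HT0).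
        apply closed_scale_inv in HC; [|lra]. destruct (Sq _ _ _ HT0 HC) as ((Q1&Q2)&Q3).
        assert (x = (x / c) * c) by (field; lra).
        split; simpl; [split; nra|auto].
      * destruct HT as [<-|[<-|[]]]; simpl in HC; destruct HC as (a&b&d&H1&H2&H3&H4&H5&H6);
        split; simpl; nra.
Qed.


Definition rng (l : list R) : R :=
  fold_right Rmax 0 (map (fun a => fold_right Rmax 0 (map (fun b => Rabs (a - b)) l)) l).

Lemma fold_max_le L r : 0 <= r -> (forall x, In x L -> x <= r) -> fold_right Rmax 0 L <= r.
Proof. induction L; simpl; intros; auto. apply Rmax_lub; auto. Qed.
Lemma fold_max_ge L x : In x L -> x <= fold_right Rmax 0 L.
Proof. induction L; simpl; intros H; [tauto|]. destruct H as [<-|H]; [apply Rmax_l|].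
  eapply Rle_trans; [apply IHL; auto|apply Rmax_r]. Qed.
Lemma fold_max_nn L : 0 <= fold_right Rmax 0 L.
Proof. induction L; simpl; [lra|]. eapply Rle_trans; [exact IHL|apply Rmax_r]. Qed.

Lemma rng_le l r : 0 <= r -> (forall a b, In a l -> In b l -> Rabs (a - b) <= r) -> rng l <= r.
Proof.
  intros Hr H. unfold rng. apply fold_max_le; auto. intros x Hx. apply in_map_iff in Hx.
  destruct Hx as (a&<-&Ha). apply fold_max_le; auto. intros y Hy. apply in_map_iff in Hy.
  destruct Hy as (b&<-&Hb). auto.
Qed.
Lemma rng_ge l a b : In a l -> In b l -> Rabs (a - b) <= rng l.
Proof.
  intros Ha Hb. unfold rng. eapply Rle_trans; [|apply fold_max_ge, in_map, Ha].
  apply fold_max_ge. apply (in_map (fun b => Rabs (a - b))), Hb.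
Qed.
Lemma rng_nn l : 0 <= rng l.
Proof. apply fold_max_nn. Qed.

Lemma rng_scale l c k lo hi : 0 < c -> In lo l -> In hi l -> lo <= k <= hi ->
  rng (map (fun a => c * a) l ++ [c * k; c * k]) = c * rng l.
Proof.
  intros Hc Hlo Hhi Hk.
  assert (Mem : forall z, In z (map (fun a => c * a) l ++ [c * k; c * k]) ->
            exists z0, z = c * z0 /\ (In z0 l \/ z0 = k)).
  { intros z Hz. apply in_app_or in Hz. destruct Hz as [Hz|Hz].
    - apply in_map_iff in Hz. destruct Hz as (z0&<-&Hz0). exists z0; auto.
    - simpl in Hz. exists k. split; [|auto]. destruct Hz as [<-|[<-|[]]]; auto. }
  assert (Dk : forall w, In w l -> Rabs (k - w) <= rng l).
  { intros w Hw. assert (A1 := rng_ge l lo w Hlo Hw). assert (A2 := rng_ge l hi w Hhi Hw).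
    revert A1 A2. unfold Rabs; repeat destruct (Rcase_abs _); lra. }
  assert (Hn := rng_nn l).
  apply Rle_antisym.
  - apply rng_le. apply Rmult_le_pos; lra.
    intros a b Ha Hb. destruct (Mem a Ha) as (a0&->&Ha0). destruct (Mem b Hb) as (b0&->&Hb0).
    replace (c * a0 - c * b0) with (c * (a0 - b0)) by ring. rewrite Rabs_mult, (Rabs_pos_eq c) by lra.
    apply Rmult_le_compat_l; [lra|].
    destruct Ha0 as [Ha0| ->]; destruct Hb0 as [Hb0| ->].
    + apply rng_ge; auto.
    + rewrite Rabs_minus_sym. auto.
    + auto.
    + replace (k - k) with 0 by ring. rewrite Rabs_R0. auto.
  - set (l' := map (fun a => c * a) l ++ [c * k; c * k]).
    assert (rng l <= rng l' / c).
    { apply rng_le. apply Rmult_le_pos; [apply rng_nn|left; apply Rinv_0_lt_compat; lra].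
      intros a b Ha Hb.
      assert (K : Rabs (c * a - c * b) <= rng l').
      { apply rng_ge; apply in_or_app; left; apply (in_map (fun a => c * a)); auto. }
      replace (c * a - c * b) with (c * (a - b)) in K by ring.
      rewrite Rabs_mult, (Rabs_pos_eq c) in K by lra.
      replace (Rabs (a - b)) with ((c * Rabs (a - b)) / c) by (field; lra).
      unfold Rdiv. apply Rmult_le_compat_r; [left; apply Rinv_0_lt_compat; lra|auto]. }
    replace (rng l') with (c * (rng l' / c)) by (field; lra).
    apply Rmult_le_compat_l; lra.
Qed.

Lemma sum_gt (l : list R) k : l <> [] -> (forall x, In x l -> k < x) -> INR (length l) * k < sumR l.
Proof.
  induction l as [|a l IH]; intros Hne H; [congruence|]. simpl length. rewrite S_INR. simpl.
  assert (k < a) by (apply H; simpl; auto).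
  destruct l as [|b l'].
  - simpl. lra.
  - assert (INR (length (b :: l')) * k < sumR (b :: l')) by (apply IH; [congruence|intros; apply H; simpl; auto]).
    lra.
Qed.
Lemma sum_lt (l : list R) k : l <> [] -> (forall x, In x l -> x < k) -> sumR l < INR (length l) * k.
Proof.
  induction l as [|a l IH]; intros Hne H; [congruence|]. simpl length. rewrite S_INR. simpl.
  assert (a < k) by (apply H; simpl; auto).
  destruct l as [|b l'].
  - simpl. lra.
  - assert (sumR (b :: l') < INR (length (b :: l')) * k) by (apply IH; [congruence|intros; apply H; simpl; auto]).
    lra.
Qed.

Lemma sumR_scale (f : R -> R) k l : sumR (map (fun a => k * f a) l) = k * sumR (map f l).
Proof. induction l; simpl; [ring|rewrite IHl; ring]. Qed.


Theorem lemma7p1 (D : list tri) :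
  is_dissection in_unit_square D ->
  exists D' : list tri,
    is_dissection in_unit_square D' /\
    length D' = (length D + 2)%nat /\
    range D' = INR (length D) / INR (length D + 2) * range D /\
    rms 1 D' = Rpower (INR (length D) / INR (length D + 2)) (3 / 2) * rms 1 D.
Proof.
  intros HD.
  assert (Hsum := area_sum D HD).
  pose proof HD as (Hpos&Hdisj&Hcov).
  assert (Hne : D <> []).
  { assert (Q : in_unit_square (0,0)) by (split; simpl; lra).
    apply Hcov in Q. destruct Q as (T&HT&_). intros E; rewrite E in HT; destruct HT. }
  assert (HN : 0 < INR (length D)).
  { apply lt_0_INR. destruct D; [congruence|simpl; lia]. }
  set (N := INR (length D)) in *.
  assert (HN2 : INR (length D + 2) = N + 2) by (rewrite plus_INR; unfold N; simpl; ring).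
  set (c := N / (N + 2)).
  assert (Hc : 0 < c < 1).
  { unfold c. split; [apply Rdiv_lt_0_compat; lra|].
    apply (Rmult_lt_reg_r (N + 2)); [lra|]. unfold Rdiv. rewrite Rmult_assoc, Rinv_l by lra. lra. }
  exists (map (scale_tri c) D ++ [t1 c; t2 c]).
  assert (Hlen : length (map (scale_tri c) D ++ [t1 c; t2 c]) = (length D + 2)%nat)
    by (rewrite length_app, length_map; simpl; lia).
  assert (Har : areas (map (scale_tri c) D ++ [t1 c; t2 c]) = map (fun a => c * a) (areas D) ++ [c * (1 / N); c * (1 / N)]).
  { unfold areas. rewrite map_app, !map_map. f_equal.
    - apply map_ext; intros; apply area_scale; lra.
    - cbn [map]. rewrite area_t1, area_t2 by lra. f_equal; [|f_equal]; unfold c; field; lra. }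
  rewrite HN2. replace (N / (N + 2)) with c by reflexivity.
  split; [apply dissect'; auto|]. split; [exact Hlen|]. split.
  - assert (R : forall L, range L = rng (areas L)) by reflexivity. rewrite !R, Har.
    assert (Hlo : exists lo, In lo (areas D) /\ lo <= 1 / N).
    { apply NNPP. intros Hn.
      assert (K : INR (length (areas D)) * (1 / N) < sumR (areas D)).
      { apply sum_gt. unfold areas; destruct D; simpl; congruence.
        intros x Hx. apply Rnot_le_lt. intros Hx2. apply Hn. eauto. }
      unfold areas in K at 1. rewrite length_map in K. fold N in K.
      replace (N * (1 / N)) with 1 in K by (field; lra). lra. }
    assert (Hhi : exists hi, In hi (areas D) /\ 1 / N <= hi).
    { apply NNPP. intros Hn.
      assert (K : sumR (areas D) < INR (length (areas D)) * (1 / N)).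
      { apply sum_lt. unfold areas; destruct D; simpl; congruence.
        intros x Hx. apply Rnot_le_lt. intros Hx2. apply Hn. eauto. }
      unfold areas in K at 2. rewrite length_map in K. fold N in K.
      replace (N * (1 / N)) with 1 in K by (field; lra). lra. }
    destruct Hlo as (lo&Hlo1&Hlo2). destruct Hhi as (hi&Hhi1&Hhi2).
    apply (rng_scale _ c (1 / N) lo hi); auto; lra.
  - unfold rms. cbv zeta. rewrite Hlen, HN2, Har. fold N.
    rewrite map_app, sumR_app, map_map.
    replace (map (fun x => (c * x - 1 / (N + 2)) ^ 2) (areas D))
      with (map (fun a => c ^ 2 * (fun a => (a - 1 / N) ^ 2) a) (areas D)).
    2:{ apply map_ext. intros a. unfold c. field. lra. }
    rewrite sumR_scale. simpl.
    replace (c * (1 / N) - 1 / (N + 2)) with 0 by (unfold c; field; lra).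
    set (S := sumR (map (fun a => (a - 1 / N) ^ 2) (areas D))).
    assert (Hp : Rpower c (3 / 2) = sqrt (c ^ 3)).
    { replace (3 / 2) with (INR 3 * / 2) by (simpl; field).
      rewrite <- Rpower_mult, Rpower_pow by lra. apply Rpower_sqrt.
      apply pow_lt; lra. }
    rewrite Hp, <- sqrt_mult_alt by (apply pow_le; lra).
    f_equal. unfold c. field. lra.
Qed.
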